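(* Let $\tau_i\in\tau_H$ be a HI-task in the multi-rate fluid model, let $k_i$ be its earliest completion window, and let $R_i=\theta_{i,k_i}^H$ if $k_i\le n_H$ and $R_i=\theta_i^H$ if $k_i=n_H+1$. If $$\sum_{j:1\le j<k_i}\theta_{i,j}^H w_j + R_i\Big(T_i - C_i^L/\theta_i^L - \sum_{j:1\le j<k_i} w_j\Big)\ \ge\ C_i^H-C_i^L,$$ $$\forall j:\ k_i\le j\le n_H,\quad \theta_i^L\le\theta_{i,j}^H,\qquad\text{and}\qquad \theta_i^L\le\theta_i^H,$$ then every carry-over job of $\tau_i$ meets its deadline in the HI-mode (i.e., receives a total of $C_i^H$ units of execution by its deadline).
   Context: A dual-criticality implicit-deadline sporadic task system $\tau$ runs on $m$ identical processors. Each task $\tau_i=(T_i,\chi_i,C_i^L,C_i^H)$ has period and relative deadline $T_i>0$, criticality $\chi_i\in\{LO,HI\}$, and WCETs $C_i^L\le C_i^H$ ($C_i^L=C_i^H$ for LO-tasks); $u_i^L=C_i^L/T_i\le1$, $u_i^H=C_i^H/T_i\le1$. $\tau_H$ is the set of HI-tasks and $n_H=|\tau_H|$. The system starts in LO-mode; the mode switch occurs at the first instant a job of some HI-task $\tau_i$ has executed $C_i^L$ units without completing; from then on the system is in HI-mode, all LO-task jobs are discarded, and every HI-task job must receive $C_i^H$ units by its deadline. No HI-job needs more than $C_i^H$ units. Multi-rate fluid model (executing at rate $\theta$ means receiving $\theta\ell$ units of execution in any interval of length $\ell$): in LO-mode every job of $\tau_i$ executes at rate $\theta_i^L\in(0,1]$;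 measuring time from the mode switch, the transition period $[0,\sum_{j=1}^{n_H}w_j)$ is divided into consecutive windows of fixed durations $w_1,\dots,w_{n_H}\ge0$, window $j$ being $[\sum_{l<j}w_l,\sum_{l\le j}w_l)$, during which each job of HI-task $\tau_i$ executes at rate $\theta_{i,j}^H\in[0,1]$; after the transition period it executes at rate $\theta_i^H\in(0,1]$. A carry-over job of $\tau_i$ is a job released before the mode switch that has not completed at the mode switch. The earliest completion window of $\tau_i$ is the largest index $k_i\in\{1,\dots,n_H+1\}$ such that $\sum_{j:1\le j<k_i}w_j<T_i-C_i^L/\theta_i^L$ (so that, if $k_i\le n_H$, $\sum_{j:1\le j\le k_i}w_j\ge T_i-C_i^L/\theta_i^L$). *)

(* Defs.v *)
From HB Require Import structures.
From mathcomp Require Import all_boot all_order all_algebra.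
From mathcomp Require Import reals.
Set Implicit Arguments. Unset Strict Implicit. Unset Printing Implicit Defensive.
Import Order.TTheory GRing.Theory Num.Theory.
Local Open Scope ring_scope.

(* Windows are indexed 1..nH; w j is the duration of window j.
   win_start w j = sum_{1 <= l < j} w_l : start time of window j
   (measured from the mode switch); win_start w (nH+1) is the end of the
   transition period. *)
Definition win_start {R : realType} (w : nat -> R) (j : nat) : R :=
  \sum_(1 <= l < j) w l.

(* Total execution received in HI-mode during [0, t] by a job of a HI-task
   that executes (fluid model) at rate th j in window j (1 <= j <= nH) and at
   rate thH after the transition period. This is the integral of the
   piecewise-constant rate function over [0, t] (for t >= 0). *)
Definition hi_service {R : realType} (nH : nat) (w th : nat -> R) (thH t : R)
  : R :=
  \sum_(1 <= j < nH.+1)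
     th j * Num.max 0 (Num.min (win_start w j.+1) t - win_start w j)
  + thH * Num.max 0 (t - win_start w nH.+1).

Definition ecw_cond {R : realType} (nH : nat) (w : nat -> R) (T CL thL : R)
  (k : nat) : Prop :=
  (1 <= k <= nH.+1)%N /\ win_start w k < T - CL / thL.

Definition earliest_completion_window {R : realType} (nH : nat) (w : nat -> R)
  (T CL thL : R) (k : nat) : Prop :=
  ecw_cond nH w T CL thL k /\
  (forall k', ecw_cond nH w T CL thL k' -> (k' <= k)%N).

(* Main.v *)
Require Import Defs.
From HB Require Import structures.
From mathcomp Require Import all_boot all_order all_algebra.
From mathcomp Require Import reals.
From mathcomp Require Import ring lra zify.
Import Order.TTheory GRing.Theory Num.Theory.
Local Open Scope ring_scope.

Ltac casele a b :=
  repeat match goal with H: context[if (a <= b)%O then _ else _] |- _ => revert H end;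
  case: (leP a b) => ? ; intros.
Ltac splitif := rewrite ?maxEle ?minEle; repeat match goal with
  | |- context[if (?a <= ?b)%O then _ else _] => casele a b
  | H : context[if (?a <= ?b)%O then _ else _] |- _ => casele a b
  end.

Ltac nlia := repeat match goal with H : ?P |- _ =>
  lazymatch P with
  | is_true (_ <= _)%N => fail
  | is_true (_ && _) => fail
  | (_ = _ :> nat) => fail
  | (_ = _ :> bool) => fail
  | _ => clear H end end; lia.

Lemma tele (R : realType) (a : nat -> R) (m : nat) (t : R) :
  (forall i j, (1 <= i)%N -> (i <= j)%N -> (j <= m.+1)%N -> a i <= a j) ->
  \sum_(1 <= j < m.+1) Num.max 0 (Num.min (a j.+1) t - a j)
  = Num.max 0 (Num.min (a m.+1) t - a 1%N).
Proof.
elim: m => [|m IH] Hm.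
  rewrite big_geq //. splitif; lra.
rewrite big_nat_recr //= IH; last by move=> i j *; apply: Hm; lia.
have h1 : a 1%N <= a m.+1 by apply: Hm; lia.
have h2 : a m.+1 <= a m.+2 by apply: Hm; lia.
splitif; lra.
Qed.

Lemma sumfact (R : realType) (aN D s : R) : 0 <= aN -> 0 < s -> s <= D ->
  Num.max 0 (Num.min aN D) - Num.max 0 (Num.min aN s) + (Num.max 0 (D - aN) - Num.max 0 (s - aN)) = D - s.
Proof. move=> *; splitif; lra. Qed.

Theorem theorem1 (R : realType) (nH : nat) (T CL CH thL thH : R)
  (th w : nat -> R) (k : nat) (r c : R) :
  (1 <= nH)%N ->
  0 < T -> 0 <= CL -> CL <= CH -> CH <= T ->
  0 < thL <= 1 -> 0 < thH <= 1 ->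
  (forall j, (1 <= j <= nH)%N -> 0 <= th j <= 1) ->
  (forall j, (1 <= j <= nH)%N -> 0 <= w j) ->
  earliest_completion_window nH w T CL thL k ->
  let Ri := if (k <= nH)%N then th k else thH in
  \sum_(1 <= j < k) th j * w j
    + Ri * (T - CL / thL - \sum_(1 <= j < k) w j) >= CH - CL ->
  (forall j, (k <= j <= nH)%N -> thL <= th j) ->
  thL <= thH ->
  (* carry-over job of tau_i *)
  r < 0 -> 0 < c <= CH ->
  thL * (0 - r) < c ->
  (forall t, r <= t < 0 -> thL * (t - r) = CL -> c <= thL * (t - r)) ->
  CH <= thL * (0 - r) + hi_service nH w th thH (r + T).
Proof.
move=> HnH HT HCL HCLH HCHT /andP[HthL0 HthL1] /andP[HthH0 HthH1] Hth Hw
  [[/andP[Hk1 Hk2] Hks] Hkmax] Ri Hyp HthLk HthLH Hr /andP[Hc0 HcH] Hnc Hsw.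
set a := win_start w.
set q := CL / thL.
have HCLq : CL = thL * q by rewrite /q; field; lra.
have Hq0 : 0 <= q by rewrite /q; apply: divr_ge0; lra.
have a1 : a 1%N = 0 by rewrite /a /win_start big_geq.
have amono : forall i j, (1 <= i)%N -> (i <= j)%N -> (j <= nH.+1)%N -> a i <= a j.
  move=> i j Hi Hij Hj; rewrite /a /win_start [X in _ <= X](big_cat_nat _ (n:=i)) //=.
  rewrite lerDl big_nat_cond; apply: sumr_ge0 => l /andP[/andP[Hl1 Hl2] _].
  apply: Hw; nlia.
have aS : forall j, (1 <= j)%N -> a j.+1 = a j + w j.
  by move=> j Hj; rewrite /a /win_start big_nat_recr.
(* the job did not reach CL before 0 *)
have Hrq : - r <= q.
  rewrite leNgt; apply/negP => Hlt.
  have := Hsw (r + q).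
  have -> : thL * (r + q - r) = CL by rewrite HCLq; ring.
  move=> H; have : c <= CL by apply: H => //; apply/andP; split; lra.
  have : thL * q < thL * (0 - r) by rewrite ltr_pM2l //; lra.
  lra.
set s := T - q.
set D := r + T.
have HsD : s <= D by rewrite /s /D; lra.
have Hks' : a k < s by [].
have Hak0 : 0 <= a k by rewrite -a1; apply: amono => //; nlia.
have Hsk1 : (k <= nH)%N -> s <= a k.+1.
  move=> Hk; rewrite leNgt; apply/negP => Hlt.
  have := Hkmax k.+1 (conj _ Hlt); nlia.
set g := fun j t => Num.max 0 (Num.min (a j.+1) t - a j).
have gs_lt : forall j, (1 <= j)%N -> (j < k)%N -> forall t, s <= t -> g j t = w j.
  move=> j Hj Hjk t Hst; rewrite /g.
  have h1 : a j.+1 <= a k by apply: amono; nlia.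
  have h2 := aS j Hj.
  have h3 : 0 <= w j by apply: Hw; nlia.
  splitif; lra.
have Hsum_s : \sum_(1 <= j < nH.+1) th j * g j s
   = \sum_(1 <= j < k) th j * w j + (if (k <= nH)%N then th k * (s - a k) else 0).
  rewrite (big_cat_nat _ (n:=k)) //=.
  congr (_ + _).
    apply: eq_big_nat => j /andP[Hj1 Hj2]; rewrite gs_lt //.
  case: ifP => Hk.
    rewrite big_ltn; last by nlia.
    have -> : g k s = s - a k.
      rewrite /g; have := Hsk1 Hk; splitif; lra.
    rewrite big_nat_cond big1 ?addr0 // => j /andP[/andP[Hj1 Hj2] _].
    have -> : g j s = 0.
      rewrite /g; have h1 : a k.+1 <= a j by apply: amono; nlia.
      have := Hsk1 Hk; splitif; lra.
    by rewrite mulr0.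
  by rewrite big_geq //; nlia.
have Hhis : hi_service nH w th thH s >= CH - CL.
  rewrite /hi_service -/a.
  have -> : \sum_(1 <= j < nH.+1) th j * Num.max 0 (Num.min (a j.+1) s - a j) = \sum_(1 <= j < nH.+1) th j * g j s by [].
  rewrite Hsum_s.
  move: Hyp; rewrite /Ri -/(win_start w k) -/a -/q.
  have Hwk : \sum_(1 <= j < k) w j = a k by [].
  rewrite ?Hwk -/s.
  case: ifP => Hk.
    have h1 : a k.+1 <= a nH.+1 by apply: amono; nlia.
    have -> : Num.max 0 (s - a nH.+1) = 0 by move: (Hsk1 Hk) => ?; splitif; lra.
    by rewrite mulr0 addr0.
  have Hk' : k = nH.+1 by nlia.
  have h : a nH.+1 < s by rewrite -Hk'.
  have -> : Num.max 0 (s - a nH.+1) = s - a nH.+1 by splitif; lra.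
  by rewrite -Hk' addr0.
have Hinc : hi_service nH w th thH D - hi_service nH w th thH s >= thL * (D - s).
  rewrite /hi_service -/a.
  have -> : \sum_(1 <= j < nH.+1) th j * Num.max 0 (Num.min (a j.+1) D - a j) = \sum_(1 <= j < nH.+1) th j * g j D by [].
  have -> : \sum_(1 <= j < nH.+1) th j * Num.max 0 (Num.min (a j.+1) s - a j) = \sum_(1 <= j < nH.+1) th j * g j s by [].
  have Hmono : forall j : nat, (1 <= j)%N -> g j s <= g j D.
    move=> j _; rewrite /g; splitif; lra.
  have Hterm : \sum_(1 <= j < nH.+1) thL * (g j D - g j s)
      <= \sum_(1 <= j < nH.+1) th j * g j D - \sum_(1 <= j < nH.+1) th j * g j s.
    rewrite -sumrB; apply: ler_sum_nat => j /andP[Hj1 Hj2].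
    case: (ltnP j k) => Hjk.
      rewrite !gs_lt //; lra.
    have h1 : thL <= th j by apply: HthLk; nlia.
    have h2 := Hmono j Hj1.
    rewrite -mulrBr; apply: ler_pM => //; lra.
  have HtD := @tele R a nH D amono.
  have Hts := @tele R a nH s amono.
  rewrite -mulr_sumr sumrB in Hterm.
  rewrite /g /= in Hterm.
  rewrite HtD Hts a1 in Hterm.
  have h1 : 0 <= a nH.+1 by rewrite -a1; apply: amono; nlia.
  have h2 : 0 < s by lra.
  have HH : thL * (Num.max 0 (D - a nH.+1) - Num.max 0 (s - a nH.+1))
     <= thH * Num.max 0 (D - a nH.+1) - thH * Num.max 0 (s - a nH.+1).
    rewrite -mulrBr; apply: ler_pM => //; try lra; splitif; lra.
  have L := @sumfact R _ _ _ h1 h2 HsD.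
  rewrite /g /=.
  move: Hterm HH; rewrite !subr0 => Hterm HH.
  have E : thL * (D - s) = thL * (Num.max 0 (Num.min (a nH.+1) D) - Num.max 0 (Num.min (a nH.+1) s))
     + thL * (Num.max 0 (D - a nH.+1) - Num.max 0 (s - a nH.+1)) by rewrite -mulrDr L.
  rewrite E; lra.
have : thL * (D - s) = thL * r + CL by rewrite HCLq /D /s; ring.
lra.
Qed.
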